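(* Let $M,K$ be real symmetric positive definite $N\times N$ matrices, $\Delta t>0$, and let $(q_n)_{n\ge0}$ satisfy the implicit Euler recursion $(M+\Delta tK)q_{n+1}=Mq_n+\Delta t f_{n+1}$, i.e. $(\frac{M}{\Delta t}+K)q_{n+1}=\frac M{\Delta t}q_n+f_{n+1}$, for given vectors $f_{n+1}\in\mathbb{R}^N$. Write $\|q\|_\zeta^2:=q^T(\frac M{\Delta t}+K)q$ and $\|f\|_{H^{-1}(\Omega)}:=\sqrt{f^TK^{-1}f}$. Then for every $n\ge0$, $$\|q_{n+1}\|_\zeta\le\|q_n\|_\zeta+\|f_{n+1}\|_{H^{-1}(\Omega)}.$$
   Context: In the paper $M$ and $K$ are the finite-element mass and stiffness matrices $M_{ij}=\int_\Omega\varphi_i\varphi_j\mu$, $K_{ij}=\int_\Omega(\nabla\varphi_i)^Ta\nabla\varphi_j$ of a parabolic problem $\mu\partial_tu-\mathrm{div}(a\nabla u)=g$ with $f_{n,i}=\int_\Omega\varphi_ig(\cdot,n\Delta t)$; only their symmetry and positive definiteness are used. *)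

(* Defs.v *)
From HB Require Import structures.
From mathcomp Require Import all_boot all_order all_algebra.
From mathcomp Require Import reals.
Set Implicit Arguments. Unset Strict Implicit. Unset Printing Implicit Defensive.
Import Order.TTheory GRing.Theory Num.Theory.
Local Open Scope ring_scope.

Definition spd (R : realType) (N : nat) (A : 'M[R]_N) : Prop :=
  A^T = A /\ forall v : 'cV[R]_N, v != 0 -> 0 < (v^T *m A *m v) 0 0.

Definition zeta_norm (R : realType) (N : nat) (dt : R) (M K : 'M[R]_N)
  (q : 'cV[R]_N) : R :=
  Num.sqrt ((q^T *m (dt^-1 *: M + K) *m q) 0 0).

Definition Hm1_norm (R : realType) (N : nat) (K : 'M[R]_N) (f : 'cV[R]_N) : R :=
  Num.sqrt ((f^T *m invmx K *m f) 0 0).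

(* Main.v *)
Require Import Defs.
From HB Require Import structures.
From mathcomp Require Import all_boot all_order all_algebra.
From mathcomp Require Import reals.
From mathcomp Require Import lra ring.
Import Order.TTheory GRing.Theory Num.Theory.
Local Open Scope ring_scope.

Section Aux.
Variables (R : realType) (N : nat).
Implicit Types (S : 'M[R]_N) (x y : 'cV[R]_N).

Definition fm x S y : R := (x^T *m S *m y) 0 0.

Lemma fm_sym S x y : S^T = S -> fm y S x = fm x S y.
Proof.
move=> hS; rewrite /fm.
have -> : (y^T *m S *m x) 0 0 = ((y^T *m S *m x)^T) 0 0 by rewrite [RHS]mxE.
by rewrite !trmx_mul trmxK hS mulmxA.
Qed.

Lemma fmDl x1 x2 S y : fm (x1 + x2) S y = fm x1 S y + fm x2 S y.
Proof. by rewrite /fm linearD /= !mulmxDl mxE. Qed.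
Lemma fmDr x S y1 y2 : fm x S (y1 + y2) = fm x S y1 + fm x S y2.
Proof. by rewrite /fm !mulmxDr mxE. Qed.
Lemma fmNl x S y : fm (- x) S y = - fm x S y.
Proof. by rewrite /fm linearN /= !mulNmx mxE. Qed.
Lemma fmNr x S y : fm x S (- y) = - fm x S y.
Proof. by rewrite /fm mulmxN mxE. Qed.

Definition psd S := S^T = S /\ forall v, 0 <= fm v S v.

Lemma cross S x y : psd S -> 2 * fm x S y <= fm x S x + fm y S y.
Proof.
move=> [hs hp]; have := hp (x - y).
rewrite fmDl !fmDr !fmNl !fmNr opprK (fm_sym S x y hs) => h.
lra.
Qed.

Lemma spd_psd S : spd S -> psd S.
Proof.
move=> [hs hp]; split=> // v; have [->|nz] := eqVneq v 0.
  by rewrite /fm mulmx0 mxE.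
exact/ltW/hp.
Qed.
End Aux.
Arguments fm {R N} x S y.
Arguments psd {R N} S.
Arguments cross {R N} S x y.
Arguments spd_psd {R N} S.


Theorem mainTheorem3 (R : realType) (N : nat) (M K : 'M[R]_N) (dt : R)
  (q f : nat -> 'cV[R]_N) :
  spd M -> spd K -> 0 < dt ->
  (forall n : nat, (M + dt *: K) *m q n.+1 = M *m q n + dt *: f n.+1) ->
  forall n : nat,
    zeta_norm dt M K (q n.+1) <= zeta_norm dt M K (q n) + Hm1_norm K (f n.+1).
Proof.
move=> hM hK hdt hrec n.
set B := dt^-1 *: M; set A := B + K; set x := q n.+1; set y := q n; set g := f n.+1.
have [Ms Mp] := spd_psd M hM; have [Ks Kp] := spd_psd K hK.
have Bpsd : psd B.
  split; first by rewrite /B linearZ /= Ms.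
  move=> v; rewrite /fm -scalemxAr -scalemxAl mxE; apply: mulr_ge0.
    by rewrite invr_ge0 ltW.
  exact: Mp.
have Kunit : K \in unitmx.
  rewrite unitmxE unitfE; apply/negP => /det0P [v vnz vK].
  have := (proj2 hK) v^T; rewrite trmxK vK !mul0mx mxE ltxx.
  by rewrite -(inj_eq (@trmx_inj _ _ _)) trmxK trmx0 vnz => /(_ isT).
set Ki := invmx K.
have Kis : Ki^T = Ki by rewrite /Ki trmx_inv Ks.
have Kipsd : psd Ki.
  split=> // v; have := Kp (Ki *m v).
  rewrite /fm trmx_mul Kis -!mulmxA (mulmxA K) mulmxV // mul1mx.
  by rewrite mulmxA.
have hA : A *m x = B *m y + g.
  have e : A = dt^-1 *: (M + dt *: K).
    by rewrite /A /B scalerDr scalerA mulVf ?gt_eqF // scale1r.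
  rewrite e -scalemxAl hrec -/y -/g scalerDr scalerA mulVf ?gt_eqF // scale1r.
  by rewrite scalemxAl.
have eqx : fm x A x = fm x B y + (x^T *m g) 0 0.
  by rewrite /fm -mulmxA hA mulmxDr mxE mulmxA.
have c1 := cross B x y Bpsd.
have c2 := cross Ki (K *m x) g Kipsd.
have e1 : fm (K *m x) Ki g = (x^T *m g) 0 0.
  by rewrite /fm trmx_mul Ks -(mulmxA _ K Ki) mulmxV // mulmx1.
have e2 : fm (K *m x) Ki (K *m x) = fm x K x.
  by rewrite /fm trmx_mul Ks -(mulmxA _ K Ki) mulmxV // mulmx1 mulmxA.
rewrite e1 e2 in c2.
have yK := Kp y.
have fA z : fm z A z = fm z B z + fm z K z.
  by rewrite /fm mulmxDr mulmxDl mxE.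
have key : fm x A x <= fm y A y + fm g Ki g.
  have := fA x; have := fA y; lra.
rewrite /zeta_norm /Hm1_norm -/B -/A -/Ki -/(fm x A x) -/(fm y A y) -/(fm g Ki g).
have yA : 0 <= fm y A y by rewrite fA; apply: addr_ge0; [exact: (proj2 Bpsd) | exact: Kp].
have gK : 0 <= fm g Ki g by exact: (proj2 Kipsd).
apply: le_trans (ler_wsqrtr key) _.
rewrite -ler_sqr ?nnegrE ?sqrtr_ge0 ?addr_ge0 ?sqrtr_ge0 //.
rewrite sqr_sqrtr ?addr_ge0 // sqrrD !sqr_sqrtr //.
have : 0 <= Num.sqrt (fm y A y) * Num.sqrt (fm g Ki g) by rewrite mulr_ge0 ?sqrtr_ge0.
lra.
Qed.
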